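(* Assume $\mathrm{char}(\mathbb{F})=p>0$ and $\deg h\ge1$, regard $A_h\subseteq A_1$ via $x\mapsto x$, $\hat y\mapsto yh$, and let $c\in C_{A_h}(x)=\mathbb{F}[x,h^py^p]$. Then there is an injective $\mathbb{F}$-algebra homomorphism $\kappa_c:A_h\to A_h$ with $\kappa_c(\hat y)=\hat y+c$ and $\kappa_c(r)=r$ for all $r\in\mathbb{F}[x]$. If $c\notin\mathbb{F}[x]$, then $\kappa_c$ is not an automorphism of $A_h$.
   Context: For $h\in\mathbb{F}[x]$, $A_h$ is the unital associative $\mathbb{F}$-algebra generated by $x,\hat y$ with defining relation $\hat yx-x\hat y=h$. $A_1$ is the Weyl algebra, generated by $x,y$ with $yx-xy=1$; for $h\ne0$, $x\mapsto x,\hat y\mapsto yh$ embeds $A_h$ into $A_1$, and $h^py^p\in A_h$. $C_{A_h}(x)=\{a\in A_h: ax=xa\}$. *)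

(* Defs.v *)
From HB Require Import structures.
From mathcomp Require Import all_boot all_order all_algebra.
Set Implicit Arguments. Unset Strict Implicit. Unset Printing Implicit Defensive.
Import GRing.Theory.
Local Open Scope ring_scope.

Definition pev (F : fieldType) (A : algType F) (r : {poly F}) (a : A) : A :=
  horner_alg a r.

Definition is_alg_hom (F : fieldType) (A B : algType F) (f : A -> B) : Prop :=
  [/\ forall a b, f (a + b) = f a + f b,
      forall a b, f (a * b) = f a * f b,
      f 1 = 1 &
      forall (k : F) a, f (k *: a) = k *: f a].

(* (A, x, yh) is the F-algebra A_h: generated by x, yh with the single
   defining relation  yh x - x yh = h(x), i.e. it satisfies the universal
   property of this presentation. *)
Definition is_Ah (F : fieldType) (h : {poly F}) (A : algType F) (x yh : A) : Prop :=
  yh * x - x * yh = pev h x /\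
  forall (B : algType F) (u v : B), v * u - u * v = pev h u ->
    (exists f : A -> B, is_alg_hom f /\ f x = u /\ f yh = v) /\
    (forall f g : A -> B, is_alg_hom f -> is_alg_hom g ->
       f x = g x -> f yh = g yh -> forall a, f a = g a).

(* Main.v *)
Require Import Defs.
From HB Require Import structures.
From mathcomp Require Import all_boot all_order all_algebra.
From mathcomp Require Import boolp.
From mathcomp Require Import ring zify.
Set Implicit Arguments. Unset Strict Implicit. Unset Printing Implicit Defensive.
Import GRing.Theory.
Local Open Scope ring_scope.

Section OpDef.
Variables (F : fieldType) (V : lmodType F).
Record linop := Linop { lf :> V -> V; lf_lin : linear lf }.
End OpDef.

Definition opT (F : fieldType) (V : lmodType F) (v0 : V) (H : v0 != 0) := linop V.

Section OpAlg.
Variables (F : fieldType) (V : lmodType F) (v0 : V) (H : v0 != 0).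
Local Notation T := (opT H).

HB.instance Definition _ := gen_eqMixin T.
HB.instance Definition _ := gen_choiceMixin T.

Lemma op_eq (f g : T) : (forall v, f v = g v) -> f = g.
Proof.
case: f g => f fl [g gl] /= e.
have efg : f = g by apply: funext.
subst g. by rewrite (Prop_irrelevance fl gl).
Qed.

Lemma lf_add (f : T) u v : f (u + v) = f u + f v.
Proof. by have := lf_lin f 1 u v; rewrite !scale1r. Qed.
Lemma lf_scale (f : T) k u : f (k *: u) = k *: f u.
Proof.
have := lf_lin f k u 0. rewrite addr0.
have -> : f 0 = 0.
  have := lf_lin f 1 0 0; rewrite !scale1r addr0 => /esym /eqP.
  by rewrite -subr_eq0 addrK => /eqP.
by rewrite addr0.
Qed.
Lemma lf0 (f : T) : f 0 = 0.
Proof. by have := lf_scale f 0 0; rewrite !scale0r. Qed.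
Lemma lfN (f : T) u : f (- u) = - f u.
Proof. by rewrite -scaleN1r lf_scale scaleN1r. Qed.

Definition op_zero : T := @Linop _ _ (fun _ => 0) ltac:(by move=> k u v; rewrite scaler0 addr0).
Definition op_add (f g : T) : T := @Linop _ _ (fun v => f v + g v)
  ltac:(by move=> k u v; rewrite !lf_add !lf_scale scalerDr addrACA).
Definition op_opp (f : T) : T := @Linop _ _ (fun v => - f v)
  ltac:(by move=> k u v; rewrite lf_add lf_scale opprD scalerN).
Definition op_one : T := @Linop _ _ (fun v => v) ltac:(by []).
Definition op_mul (f g : T) : T := @Linop _ _ (fun v => f (g v))
  ltac:(by move=> k u v; rewrite !lf_add !lf_scale).
Definition op_scale (k : F) (f : T) : T := @Linop _ _ (fun v => k *: f v)
  ltac:(by move=> l u v; rewrite lf_add lf_scale scalerDr !scalerA mulrC).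

Lemma op_addA : associative op_add.
Proof. by move=> f g h; apply: op_eq => v /=; rewrite addrA. Qed.
Lemma op_addC : commutative op_add.
Proof. by move=> f g; apply: op_eq => v /=; rewrite addrC. Qed.
Lemma op_add0 : left_id op_zero op_add.
Proof. by move=> f; apply: op_eq => v /=; rewrite add0r. Qed.
Lemma op_addN : left_inverse op_zero op_opp op_add.
Proof. by move=> f; apply: op_eq => v /=; rewrite addNr. Qed.

HB.instance Definition _ := GRing.isZmodule.Build T op_addA op_addC op_add0 op_addN.

Lemma op_mulA : associative op_mul.
Proof. by move=> f g h; apply: op_eq. Qed.
Lemma op_mul1 : left_id op_one op_mul.
Proof. by move=> f; apply: op_eq. Qed.
Lemma op_mulr1 : right_id op_one op_mul.
Proof. by move=> f; apply: op_eq. Qed.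
Lemma op_mulDl : left_distributive op_mul +%R.
Proof. by move=> f g h; apply: op_eq. Qed.
Lemma op_mulDr : right_distributive op_mul +%R.
Proof. by move=> f g h; apply: op_eq => v /=; rewrite lf_add. Qed.
Lemma op_one_neq0 : op_one != 0.
Proof.
apply/eqP => e. have : op_one v0 = (0 : T) v0 by rewrite e.
by move=> /= E; move: H; rewrite E eqxx.
Qed.

HB.instance Definition _ := GRing.Zmodule_isNzRing.Build T
  op_mulA op_mul1 op_mulr1 op_mulDl op_mulDr op_one_neq0.

Lemma op_scaleA a b (f : T) : op_scale a (op_scale b f) = op_scale (a * b) f.
Proof. by apply: op_eq => v /=; rewrite scalerA. Qed.
Lemma op_scale1 : left_id 1 op_scale.
Proof. by move=> f; apply: op_eq => v /=; rewrite scale1r. Qed.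
Lemma op_scaleDr : right_distributive op_scale +%R.
Proof. by move=> a f g; apply: op_eq => v /=; rewrite scalerDr. Qed.
Lemma op_scaleDl (f : T) : {morph op_scale^~ f : a b / a + b}.
Proof. by move=> a b; apply: op_eq => v /=; rewrite scalerDl. Qed.

HB.instance Definition _ := GRing.Zmodule_isLmodule.Build F T
  op_scaleA op_scale1 op_scaleDr op_scaleDl.

Lemma op_scaleAl (a : F) (f g : T) : a *: (f * g) = (a *: f) * g.
Proof. by apply: op_eq. Qed.
HB.instance Definition _ := GRing.Lmodule_isLalgebra.Build F T op_scaleAl.
Lemma op_scaleAr (a : F) (f g : T) : a *: (f * g) = f * (a *: g).
Proof. by apply: op_eq => v /=; rewrite lf_scale. Qed.
HB.instance Definition _ := GRing.Lalgebra_isAlgebra.Build F T op_scaleAr.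

Lemma opE_add (f g : T) v : (f + g) v = f v + g v. Proof. by []. Qed.
Lemma opE_mul (f g : T) v : (f * g) v = f (g v). Proof. by []. Qed.
Lemma opE_one v : (1 : T) v = v. Proof. by []. Qed.
Lemma opE_zero v : (0 : T) v = 0. Proof. by []. Qed.
Lemma opE_opp (f : T) v : (- f) v = - f v. Proof. by []. Qed.
Lemma opE_scale k (f : T) v : (k *: f) v = k *: f v. Proof. by []. Qed.
End OpAlg.


Definition V0 (F : fieldType) := {poly {poly F}}.
HB.instance Definition _ (F : fieldType) := GRing.Zmodule.on (V0 F).
Section V0S.
Variable F : fieldType.
Definition scV0 (k : F) (P : V0 F) : V0 F := ((k%:P)%:P * (P : {poly {poly F}})).
Lemma scV0A a b v : scV0 a (scV0 b v) = scV0 (a * b) v.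
Proof. by rewrite /scV0 mulrA -!polyCM. Qed.
Lemma scV01 : left_id 1 scV0.
Proof. by move=> v; rewrite /scV0 !polyC1 mul1r. Qed.
Lemma scV0Dr : right_distributive scV0 +%R.
Proof. by move=> a u v; rewrite /scV0 mulrDr. Qed.
Lemma scV0Dl v : {morph scV0^~ v: a b / a + b}.
Proof. by move=> a b; rewrite /scV0 !polyCD mulrDl. Qed.
HB.instance Definition _ := GRing.Zmodule_isLmodule.Build F (V0 F) scV0A scV01 scV0Dr scV0Dl.
End V0S.

Lemma pev_rmorphM (F : fieldType) (A : algType F) (a : A) r s : pev (r * s) a = pev r a * pev s a.
Proof. by rewrite /pev rmorphM. Qed.
Lemma pev_add (F : fieldType) (A : algType F) (a : A) r s : pev (r + s) a = pev r a + pev s a.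
Proof. by rewrite /pev rmorphD. Qed.
Lemma pevX (F : fieldType) (A : algType F) (a : A) : pev 'X a = a.
Proof. by rewrite /pev horner_algX. Qed.
Lemma pevC (F : fieldType) (A : algType F) (a : A) c : pev c%:P a = c%:A.
Proof. by rewrite /pev horner_algC. Qed.

Lemma hom_add0 (F : fieldType) (A B : algType F) (f : A -> B) : is_alg_hom f -> f 0 = 0.
Proof. case=> fD _ _ _; have := fD 0 0; rewrite addr0 => /esym /eqP; by rewrite -subr_eq0 addrK => /eqP. Qed.
Lemma hom_opp (F : fieldType) (A B : algType F) (f : A -> B) : is_alg_hom f -> forall a, f (- a) = - f a.
Proof. move=> hf a; case: (hf) => fD _ _ _; apply/eqP; rewrite -subr_eq0 opprK -fD addNr; by rewrite (hom_add0 hf). Qed.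
Lemma hom_pev (F : fieldType) (A B : algType F) (f : A -> B) : is_alg_hom f ->
  forall r a, f (pev r a) = pev r (f a).
Proof.
move=> hf; case: (hf) => fD fM f1 fZ r a.
elim/poly_ind: r => [|q c IH]; first by rewrite /pev !rmorph0 (hom_add0 hf).
by rewrite !pev_add !pev_rmorphM !pevX !pevC fD fM IH fZ f1.
Qed.

Section Main.
Variables (F : fieldType) (h : {poly F}) (A : algType F) (x yh : A).
Hypothesis hA : is_Ah h x yh.
Hypothesis hnz : h != 0.
Local Notation PP := {poly {poly F}}.

Definition Xf (P : PP) : PP := ('X)%:P * P.
Definition Ef (P : PP) : PP := map_poly (fun q => h * q^`()) P.
Definition Df (P : PP) : PP := Ef P + P * 'X.

Lemma coefEf P i : (Ef P)`_i = h * (P`_i)^`().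
Proof. by rewrite /Ef coef_map_id0 // deriv0 mulr0. Qed.
Lemma Ef_add P Q : Ef (P + Q) = Ef P + Ef Q.
Proof. by apply/polyP => i; rewrite coefD !coefEf coefD derivD mulrDr. Qed.
Lemma Ef_scale (k : F) P : Ef (k%:P%:P * P) = k%:P%:P * Ef P.
Proof.
apply/polyP => i; rewrite coefCM !coefEf coefCM derivM derivC mul0r add0r.
by rewrite mulrCA.
Qed.
Lemma size_Ef P : (size (Ef P) <= size P)%N.
Proof. by apply/leq_sizeP => j hj; rewrite coefEf (leq_sizeP _ _ (leqnn _)) // deriv0 mulr0. Qed.

Lemma scE k (u : V0 F) : k *: u = (k%:P)%:P * (u : PP). Proof. by []. Qed.

Definition one0 : V0 F := 1.
Lemma one0_neq0 : one0 != 0. Proof. exact: oner_neq0. Qed.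
Definition OpV := opT one0_neq0.

Lemma Xf_lin : linear (Xf : V0 F -> V0 F).
Proof. by move=> k u v; rewrite !scE /Xf mulrDr mulrCA. Qed.
Lemma Df_lin : linear (Df : V0 F -> V0 F).
Proof.
move=> k u v; rewrite !scE /Df Ef_add Ef_scale mulrDl mulrDr mulrA.
by rewrite addrACA.
Qed.
Definition Xop : OpV := @Linop F (V0 F) Xf Xf_lin.
Definition Dop : OpV := @Linop F (V0 F) Df Df_lin.

Lemma pev_Xop r (P : V0 F) : (pev r Xop : OpV) P = r%:P * (P : PP).
Proof.
elim/poly_ind: r P => [|q c IH] P; first by rewrite /pev rmorph0 polyC0 mul0r.
rewrite pev_add pev_rmorphM pevX pevC opE_add opE_mul IH opE_scale opE_one scE /=.
by rewrite /Xf polyCD polyCM mulrDl mulrA.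
Qed.

Lemma relOp : Dop * Xop - Xop * Dop = pev h Xop.
Proof.
apply: op_eq => P; rewrite pev_Xop opE_add opE_opp !opE_mul /= /Df /Xf.
have -> : Ef ('X%:P * P) = 'X%:P * Ef P + h%:P * P.
  apply/polyP => i; rewrite coefD !coefCM !coefEf coefCM derivM derivX mul1r.
  by rewrite mulrDr mulrCA addrC.
rewrite mulrDr; ring.
Qed.

Lemma relA : yh * x - x * yh = pev h x.
Proof. by case: hA. Qed.

Definition Phi (P : PP) : A := \sum_(i < size P) pev P`_i x * yh ^+ i.

Lemma PhiE n (P : PP) : (size P <= n)%N -> Phi P = \sum_(i < n) pev P`_i x * yh ^+ i.
Proof.
move=> hn; rewrite /Phi (big_ord_widen n (fun i => pev P`_i x * yh ^+ i) hn).
rewrite big_mkcond /=; apply: eq_bigr => i _.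
case: ltnP => // hi; by rewrite (leq_sizeP _ _ (leqnn _)) // /pev rmorph0 mul0r.
Qed.

Lemma size_CM (c : {poly F}) (P : PP) : (size (c%:P * P)%R <= size P)%N.
Proof.
apply: leq_trans (size_polyMleq _ _) _.
by case: (size (c%:P)) (size_polyC_leq1 c) => [|[|]] //= _; rewrite leq_pred.
Qed.

Lemma Phi_add P Q : Phi (P + Q) = Phi P + Phi Q.
Proof.
set n := maxn (size P) (size Q).
rewrite (PhiE (n := n) (size_polyD _ _)) (@PhiE n P) ?leq_maxl // (@PhiE n Q) ?leq_maxr //.
by rewrite -big_split /=; apply: eq_bigr => i _; rewrite coefD pev_add mulrDl.
Qed.

Lemma Phi_scale (k : F) P : Phi (k%:P%:P * P) = k *: Phi P.
Proof.
have hs : (size (k%:P%:P * P)%R <= size P)%N.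
  exact: size_CM.
rewrite (PhiE hs) /Phi scaler_sumr; apply: eq_bigr => i _.
by rewrite coefCM pev_rmorphM pevC mulr_algl scalerAl.
Qed.

Lemma Phi0 : Phi 0 = 0.
Proof. by rewrite /Phi size_poly0 big_ord0. Qed.

Lemma PhiC c : Phi c%:P = pev c x.
Proof.
rewrite (@PhiE 1) ?size_polyC_leq1 // big_ord_recl big_ord0 addr0 expr0 mulr1.
by rewrite coefC.
Qed.

Lemma Phi_MX P : Phi (P * 'X) = Phi P * yh.
Proof.
have hs : (size (P * 'X)%R <= (size P).+1)%N.
  by apply: leq_trans (size_polyMleq _ _) _; rewrite size_polyX addn2.
rewrite (PhiE hs) big_ord_recl coefMX eqxx /pev rmorph0 mul0r add0r.
rewrite /Phi mulr_suml; apply: eq_bigr => i _.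
by rewrite coefMX /= exprSr mulrA.
Qed.

Lemma Phi_X P : Phi (Xf P) = x * Phi P.
Proof.
have hs : (size (Xf P) <= size P)%N.
  exact: size_CM.
rewrite (PhiE hs) /Phi mulr_sumr; apply: eq_bigr => i _.
by rewrite coefCM pev_rmorphM pevX mulrA.
Qed.

Lemma pev_commX r : pev r x * x = x * pev r x.
Proof.
transitivity (pev (r * 'X) x); first by rewrite pev_rmorphM pevX.
by rewrite mulrC pev_rmorphM pevX.
Qed.

Lemma ac4 (V:zmodType) (a b d e : V) : a + b + d + e = a + e + (d + b).
Proof. by rewrite -!addrA; congr (_+_); rewrite [RHS]addrC -addrA addrCA. Qed.

Lemma comm_yh q : yh * pev q x = pev q x * yh + pev (h * q^`()) x.
Proof.
elim/poly_ind: q => [|q c IH]; first by rewrite /pev !rmorph0 mulr0 mul0r deriv0 mulr0 rmorph0 addr0.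
rewrite derivD derivC addr0 derivM derivX mulr1 !pev_add !pev_rmorphM pevX pevC.
rewrite mulrDr mulrA IH mulrDl -mulrA.
have -> : yh * x = x * yh + pev h x by rewrite -relA addrC subrK.
have e1 : pev (h * q^`()) x * x = pev h x * pev (q^`() * 'X) x.
  by rewrite -pev_rmorphM mulrA [in RHS]pev_rmorphM pevX.
have e2 : pev q x * pev h x = pev h x * pev q x by rewrite -!pev_rmorphM mulrC.
rewrite mulrDr e1 e2 mulrA mulrDl mulr_algr mulr_algl pev_add mulrDr.
by rewrite ac4.
Qed.

Lemma Phi_D P : Phi (Df P) = yh * Phi P.
Proof.
rewrite /Df Phi_add Phi_MX (PhiE (size_Ef P)) /Phi mulr_sumr mulr_suml -big_split /=.
apply: eq_bigr => i _; by rewrite mulrA comm_yh mulrDl coefEf -mulrA -exprSr exprS mulrA addrC.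
Qed.

Lemma hom_rel (B : algType F) (f : A -> B) : is_alg_hom f ->
  f yh * f x - f x * f yh = pev h (f x).
Proof.
move=> hf; case: (hf) => fD fM _ _.
by rewrite -!fM -(hom_opp hf) -fD relA (hom_pev hf).
Qed.

Variables (rho0 : A -> OpV).
Hypotheses (hr : is_alg_hom rho0) (rx : rho0 x = Xop) (ry : rho0 yh = Dop).

Definition W := (V0 F * A)%type.
Definition wv : W := (one0, 0).
Lemma wH : wv != 0.
Proof. apply/eqP => e; move: one0_neq0; have := congr1 fst e; rewrite /= => ->; by rewrite eqxx. Qed.
Definition OpW := opT wH.

Lemma lfV_add (f : OpV) u v : f (u + v) = f u + f v.
Proof. exact: (@lf_add _ _ _ one0_neq0). Qed.
Lemma lfV_scale (f : OpV) k u : f (k *: u) = k *: f u.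
Proof. exact: (@lf_scale _ _ _ one0_neq0). Qed.
Lemma lfW_add (f : OpW) u v : f (u + v) = f u + f v.
Proof. exact: (@lf_add _ _ _ wH). Qed.
Lemma lfW_scale (f : OpW) k u : f (k *: u) = k *: f u.
Proof. exact: (@lf_scale _ _ _ wH). Qed.

Lemma M_lin (a : A) : linear (fun w : W => (rho0 a w.1, a * w.2) : W).
Proof.
move=> k u v /=. rewrite lfV_add lfV_scale mulrDr -scalerAr.
by [].
Qed.

Lemma opW_eq (f g : OpW) : (forall w, f w = g w) -> f = g.
Proof. exact: (@op_eq _ _ _ wH). Qed.
Lemma opV_eq (f g : OpV) : (forall w, f w = g w) -> f = g.
Proof. exact: (@op_eq _ _ _ one0_neq0). Qed.

Definition M (a : A) : OpW := @Linop F W _ (M_lin a).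

Lemma M_hom : is_alg_hom M.
Proof.
case: (hr) => rD rM r1 rZ.
split.
- by move=> a b; apply: opW_eq => -[u v]; rewrite /= rD mulrDl.
- by move=> a b; apply: opW_eq => -[u v]; rewrite /= rM mulrA.
- by apply: opW_eq => -[u v]; rewrite /= r1 mul1r.
- by move=> k a; apply: opW_eq => -[u v]; rewrite /= rZ -scalerAl.
Qed.

Lemma Phi_lin k (u v : V0 F) : Phi (k *: u + v) = k *: Phi u + Phi v.
Proof. by rewrite Phi_add scE Phi_scale. Qed.

Lemma J_lin : linear (fun w : W => (w.1, w.2 + Phi w.1) : W).
Proof.
move=> k u v; apply: injective_projections => /=; rewrite /= // Phi_lin scalerDr addrACA. by [].
Qed.
Lemma Ji_lin : linear (fun w : W => (w.1, w.2 - Phi w.1) : W).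
Proof.
move=> k u v; apply: injective_projections => /=; rewrite /= // Phi_lin opprD -scalerN scalerDr addrACA. by [].
Qed.
Definition J : OpW := @Linop F W _ J_lin.
Definition Ji : OpW := @Linop F W _ Ji_lin.
Lemma JJi : J * Ji = 1.
Proof. by apply: opW_eq => -[u v]; rewrite /= subrK. Qed.
Lemma JiJ : Ji * J = 1.
Proof. by apply: opW_eq => -[u v]; rewrite /= addrK. Qed.

Definition g (a : A) : OpW := Ji * M a * J.
Lemma g_hom : is_alg_hom g.
Proof.
case: M_hom => mD mM m1 mZ.
split.
- by move=> a b; rewrite /g mD mulrDr mulrDl.
- by move=> a b; rewrite /g mM !mulrA -(mulrA _ J Ji) JJi mulr1.
- by rewrite /g m1 mulr1 JiJ.
- by move=> k a; rewrite /g mZ -scalerAr -scalerAl.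
Qed.

Lemma M_eq_g a : M a = g a.
Proof.
case: hA => _ /(_ OpW (M x) (M yh) (hom_rel M_hom)) [_ uq].
apply: (uq _ _ M_hom g_hom).
- apply: opW_eq => -[P b]; apply: injective_projections => /=; rewrite /= ?rx //.
  by rewrite Phi_X mulrDr addrK.
- apply: opW_eq => -[P b]; apply: injective_projections => /=; rewrite /= ?ry //.
  by rewrite Phi_D mulrDr addrK.
Qed.

Lemma key a (P : V0 F) : Phi (rho0 a P) = a * Phi P.
Proof.
have := congr1 (fun f : OpW => (f (P, 0)).2) (M_eq_g a).
rewrite /= mulr0 add0r => /esym /eqP; rewrite subr_eq0 => /eqP.
by [].
Qed.

Definition psi (a : A) : PP := rho0 a one0.

Lemma Phi_psi a : Phi (psi a) = a.
Proof. by rewrite /psi key /one0 -polyC1 PhiC pevC scale1r mulr1. Qed.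

Lemma rho0_add a b : rho0 (a + b) = rho0 a + rho0 b.
Proof. by case: hr. Qed.
Lemma rho0_0 : rho0 0 = 0.
Proof. exact: (hom_add0 hr). Qed.
Lemma rho0_mul a b : rho0 (a * b) = rho0 a * rho0 b.
Proof. by case: hr. Qed.

Lemma psi_add a b : psi (a + b) = psi a + psi b.
Proof. by rewrite /psi rho0_add. Qed.
Lemma psi0 : psi 0 = 0.
Proof. by rewrite /psi rho0_0. Qed.
Lemma psi_pev r : psi (pev r x) = r%:P.
Proof. by rewrite /psi (hom_pev hr) rx pev_Xop /one0 mulr1. Qed.
Lemma psi_yh : psi yh = 'X.
Proof.
rewrite /psi ry /= /Df /one0 mul1r.
have -> : Ef 1 = 0 by apply/polyP => i; rewrite coefEf coef1 coef0; case: (i == 0)%N; rewrite ?derivC ?deriv0 mulr0.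
by rewrite add0r.
Qed.
Lemma psi_mul a b : psi (a * b) = rho0 a (psi b).
Proof. by rewrite /psi rho0_mul. Qed.

Lemma size_Df (Q : PP) : (size (Df Q) <= (size Q).+1)%N.
Proof.
apply: leq_trans (size_polyD _ _) _; rewrite geq_max.
apply/andP; split; first by apply: leq_trans (size_Ef Q) _.
by apply: leq_trans (size_polyMleq _ _) _; rewrite size_polyX addn2.
Qed.

Lemma deg_lemma (P Q : PP) :
  (size (rho0 (Phi P) Q - P * Q)%R <= (size P + size Q).-2)%N.
Proof.
elim/poly_ind: P Q => [|P c IH] Q.
  by rewrite Phi0 rho0_0 mul0r subr0 size_poly0.
have eR : rho0 (Phi (P * 'X + c%:P)) Q = rho0 (Phi P) (Df Q) + c%:P * Q.
  rewrite Phi_add Phi_MX PhiC rho0_add rho0_mul ry (hom_pev hr) rx.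
  by rewrite opE_add opE_mul pev_Xop.
rewrite eR.
have [->|P0] := eqVneq P 0.
  by rewrite Phi0 rho0_0 mul0r !add0r subrr size_poly0.
have -> : rho0 (Phi P) (Df Q) + c%:P * Q - (P * 'X + c%:P) * Q
    = (rho0 (Phi P) (Df Q) - P * Df Q) + P * Ef Q.
  rewrite /Df; set T := rho0 _ _; ring.
have hs : size (P * 'X + c%:P) = (size P).+1.
  by rewrite size_MXaddC (negbTE P0).
rewrite hs; apply: leq_trans (size_polyD _ _) _; rewrite geq_max; apply/andP; split.
  apply: leq_trans (IH (Df Q)) _; have := size_Df Q; lia.
apply: leq_trans (size_polyMleq _ _) _; have := size_Ef Q.
have : (0 < size P)%N by rewrite size_poly_gt0.
lia.
Qed.

Lemma psi_inj a : psi a = 0 -> a = 0.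
Proof. by move=> e; rewrite -(Phi_psi a) e Phi0. Qed.

Lemma pevh_neq0 : pev h x != 0.
Proof. apply/eqP => e; have := psi_pev h; rewrite e psi0 => /esym /eqP; by rewrite polyC_eq0 (negbTE hnz). Qed.

Variables (c : A) (kap : A -> A).
Hypotheses (hc : c * x = x * c) (hk : is_alg_hom kap) (kx : kap x = x) (ky : kap yh = yh + c).

Lemma kap_pev r : kap (pev r x) = pev r x.
Proof. by rewrite (hom_pev hk) kx. Qed.

Definition w := psi (yh + c).

Lemma sw2 : (2 <= size w)%N.
Proof.
rewrite leqNgt ltnS; apply/negP => /size1_polyC ew.
have e1 : yh + c = pev w`_0 x by rewrite -(Phi_psi (yh + c)) -/w {1}ew PhiC.
have : (yh + c) * x - x * (yh + c) = pev h x.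
  by rewrite mulrDl mulrDr hc opprD addrACA subrr addr0 relA.
rewrite e1 pev_commX subrr => /esym /eqP; by rewrite (negbTE pevh_neq0).
Qed.

Lemma kap_add a b : kap (a + b) = kap a + kap b. Proof. by case: hk. Qed.
Lemma kap_mul a b : kap (a * b) = kap a * kap b. Proof. by case: hk. Qed.

Lemma size_kap (P : PP) : P != 0 ->
  size (psi (kap (Phi P))) = ((size P).-1 * (size w).-1).+1.
Proof.
elim/poly_ind: P => [|P c0 IH]; first by rewrite eqxx.
move=> nz.
rewrite Phi_add Phi_MX PhiC kap_add kap_mul ky kap_pev psi_add psi_pev.
have [eP|P0] := eqVneq P 0.
  subst P; move: nz; rewrite mul0r add0r polyC_eq0 => c00.
  by rewrite Phi0 (hom_add0 hk) mul0r psi0 add0r !size_polyC c00.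
have IH' := IH P0.
set b := kap (Phi P). rewrite -/b in IH'.
have bnz : psi b != 0 by rewrite -size_poly_gt0 IH'.
have wnz : w != 0 by rewrite -size_poly_gt0; apply: leq_trans sw2.
have em : psi (b * (yh + c)) = psi b * w + (rho0 (Phi (psi b)) w - psi b * w).
  by rewrite Phi_psi psi_mul -/w addrCA subrr addr0.
have hR := deg_lemma (psi b) w.
have hM : size (psi b * w) = (size (psi b) + size w).-1 by rewrite size_mul.
have s2 := sw2.
rewrite em size_polyDl; last first.
  rewrite size_polyDl; last by rewrite hM; move: hR; rewrite IH'; lia.
  by apply: leq_ltn_trans (size_polyC_leq1 c0) _; rewrite hM IH'; lia.
rewrite size_polyDl; last by rewrite hM; move: hR; rewrite IH'; lia.
rewrite hM IH' size_MXaddC (negbTE P0) /=.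
have -> : (size P) = (size P).-1.+1 by rewrite prednK // size_poly_gt0.
set n := (size P).-1; set m := (size w).-1.
have -> : size w = m.+1 by rewrite /m prednK //; lia.
rewrite /= mulSnr; lia.
Qed.

Lemma kap_inj : injective kap.
Proof.
move=> a1 a2 e.
have e0 : kap (a1 - a2) = 0 by rewrite kap_add (hom_opp hk) e subrr.
apply/eqP; rewrite -subr_eq0; apply/eqP.
have [P0|Pnz] := eqVneq (psi (a1 - a2)) 0; first exact: psi_inj.
have := size_kap Pnz; rewrite Phi_psi e0 psi0 size_poly0 => /eqP.
by rewrite eq_sym.
Qed.

Lemma not_bij : (~ exists r : {poly F}, c = pev r x) -> ~ bijective kap.
Proof.
move=> nr [ginv _ gK].
have sc2 : (2 <= size (psi c))%N.
  rewrite leqNgt ltnS; apply/negP => /size1_polyC ec; apply: nr.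
  by exists (psi c)`_0; rewrite -[LHS](Phi_psi c) {1}ec PhiC.
have sc3 : (3 <= size (psi c))%N.
  rewrite ltn_neqAle sc2 andbT eq_sym; apply/eqP => s2.
  have ec : c = pev (psi c)`_0 x + pev (psi c)`_1 x * yh.
    rewrite -[LHS](Phi_psi c) (@PhiE 2) ?s2 //.
    by rewrite big_ord_recl big_ord_recl big_ord0 addr0 expr0 mulr1 expr1.
  have e0 : c * x - x * c = pev ((psi c)`_1 * h) x.
    rewrite {1 2}ec mulrDl mulrDr pev_commX opprD addrACA subrr add0r.
    by rewrite mulrA -pev_commX -!mulrA -mulrBr relA pev_rmorphM.
  move: e0; rewrite hc subrr => /(congr1 psi); rewrite psi0 psi_pev => /esym /eqP.
  rewrite polyC_eq0 mulf_eq0 (negbTE hnz) orbF => /eqP c1.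
  have : lead_coef (psi c) != 0 by rewrite lead_coef_eq0 -size_poly_gt0 s2.
  by rewrite lead_coefE s2 c1 eqxx.
have sw3 : (3 <= size w)%N.
  by rewrite /w psi_add psi_yh addrC size_polyDl ?size_polyX.
have ka : kap (ginv yh) = yh by rewrite gK.
have [P0|Pnz] := eqVneq (psi (ginv yh)) 0.
  move: ka; rewrite (psi_inj P0) (hom_add0 hk) => /(congr1 psi).
  by rewrite psi0 psi_yh => /esym /eqP; rewrite polyX_eq0.
have := size_kap Pnz; rewrite Phi_psi ka psi_yh size_polyX.
move: sw3; set m := size w; set n := (size _).-1 => h3 /eqP.
rewrite eqSS => /eqP e1.
have : (2 <= m.-1)%N by lia.
nia.
Qed.
End Main.

Theorem proposition8p15 (F : fieldType) (p : nat) (h : {poly F})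
  (A : algType F) (x yh : A) (c : A) :
  p \in [pchar F] -> (1 < size h)%N -> is_Ah h x yh ->
  c * x = x * c ->
  exists kappa : A -> A,
    [/\ is_alg_hom kappa, injective kappa, kappa yh = yh + c,
        (forall r : {poly F}, kappa (pev r x) = pev r x) &
        ((~ exists r : {poly F}, c = pev r x) -> ~ bijective kappa)].
Proof.
move=> _ hs hA hc.
have hnz : h != 0 by rewrite -size_poly_gt0; apply: leq_trans hs.
case: (hA) => rel hU.
have [[rho0 [hr [rx ry]]] _] := hU _ (Xop F) (Dop h) (relOp h).
have rel2 : (yh + c) * x - x * (yh + c) = pev h x.
  by rewrite mulrDl mulrDr hc opprD addrACA subrr addr0 rel.
have [[kap [hk [kx ky]]] _] := hU A x (yh + c) rel2.
exists kap; split => //.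
- exact: (kap_inj hA hnz hr rx ry hc hk kx ky).
- exact: kap_pev.
- exact: (not_bij hA hnz hr rx ry hc hk kx ky).
Qed.
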